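(* Let $n,m\ge1$ be integers (not necessarily distinct). Then \[ \mathcal{R}_{\mathcal{BOOL}}(n,m)=\mathcal{R}_{\mathcal{IDM}}(n,m)=\mathcal{R}_{\mathcal{PO}}(n,m)=(n-1)(m-1)+1 . \]
   Context: For a commutative ring $R$ (with $1\ne0$), the idempotents graph $\mathrm{Idm}(R)$ is the simple undirected graph whose vertices are the idempotents of $R$, distinct $a,b$ adjacent iff $a\mid b$ or $b\mid a$. $\mathcal{IDM}$ is the class of all idempotents graphs of commutative rings, and $\mathcal{BOOL}\subseteq\mathcal{IDM}$ the class of idempotents graphs of Boolean rings. $\mathcal{PO}$ is the class of partial order graphs $G_A$ of posets $(A,\le)$ (distinct vertices adjacent iff comparable). For a class $\mathcal{C}$ of graphs, $\mathcal{R}_{\mathcal{C}}(n,m)$ is the minimal $r$ such that every induced subgraph with $r$ vertices of any graph in $\mathcal{C}$ contains either $K_n$ or an independent set of $m$ vertices. *)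

(* Defs.v *)
From HB Require Import structures.
From mathcomp Require Import all_boot all_order all_algebra.
Set Implicit Arguments. Unset Strict Implicit. Unset Printing Implicit Defensive.
Import Order.TTheory GRing.Theory.
Local Open Scope ring_scope.

(* A (simple, undirected) graph: a vertex predicate on a carrier type and an
   adjacency relation (only used on distinct vertices). *)
Record graph := Graph {
  gV : eqType;
  gvert : gV -> Prop;
  gadj : gV -> gV -> Prop }.

Definition has_clique (V : eqType) (adj : V -> V -> Prop) (S : seq V) (k : nat) :=
  exists T : seq V, [/\ uniq T, size T = k, {subset T <= S} &
    forall x y, x \in T -> y \in T -> x <> y -> adj x y].

Definition has_indep (V : eqType) (adj : V -> V -> Prop) (S : seq V) (k : nat) :=
  exists T : seq V, [/\ uniq T, size T = k, {subset T <= S} &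
    forall x y, x \in T -> y \in T -> x <> y -> ~ adj x y].

Definition ramsey_prop (C : graph -> Prop) (n m r : nat) :=
  forall G : graph, C G ->
  forall S : seq (gV G), uniq S -> size S = r -> (forall x, x \in S -> @gvert G x) ->
    has_clique (@gadj G) S n \/ has_indep (@gadj G) S m.

Definition ramsey_number_is (C : graph -> Prop) (n m N : nat) :=
  ramsey_prop C n m N /\ forall r, (r < N)%N -> ~ ramsey_prop C n m r.

Definition rdivides (R : comNzRingType) (a b : R) := exists c : R, b = a * c.

Definition idempotent (R : comNzRingType) (e : R) := e * e = e.

Definition Idm (R : comNzRingType) : graph :=
  @Graph R (@idempotent R) (fun a b => a <> b /\ (rdivides a b \/ rdivides b a)).

Definition boolean_ring (R : comNzRingType) := forall x : R, x * x = x.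

Definition IDM (G : graph) := exists R : comNzRingType, G = Idm R.

Definition BOOL (G : graph) := exists R : comNzRingType, boolean_ring R /\ G = Idm R.

Definition PO_graph (d : Order.disp_t) (T : porderType d) : graph :=
  @Graph T (fun _ => True) (fun a b => a <> b /\ ((a <= b)%O \/ (b <= a)%O)).

Definition PO (G : graph) := exists (d : Order.disp_t) (T : porderType d), G = PO_graph T.

(* Main.v *)
From HB Require Import structures.
Require Import Defs.
From mathcomp Require Import all_boot all_order all_algebra.
From mathcomp Require Import zify.
Set Implicit Arguments. Unset Strict Implicit. Unset Printing Implicit Defensive.
Import Order.TTheory GRing.Theory.
Import Order.DefaultSetSubsetOrder.

Section Mirsky.
Variables (V : eqType) (lt : rel V).
Hypothesis ltirr : irreflexive lt.
Hypothesis lttr : transitive lt.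

Lemma maxex (L : seq V) x : x \in L ->
  exists2 y, y \in L & ((y == x) || lt x y) && ~~ has (lt y) L.
Proof.
have [k] := ubnP (count (lt x) L); elim: k x => // k IH x hk xL.
case: (boolP (has (lt x) L)) => [/hasP [z zL xz] | nh]; last first.
  by exists x; rewrite ?eqxx.
have cz : count (lt z) L < count (lt x) L.
  set s := [seq w <- L | lt x w].
  have -> : count (lt z) L = count (lt z) s.
    rewrite count_filter; apply: eq_count => w /=.
    by case hzw: (lt z w) => //=; rewrite (lttr xz hzw).
  have -> : count (lt x) L = size s by rewrite size_filter.
  rewrite -(count_predC (lt z) s) -{1}(addn0 (count _ s)) ltn_add2l.
  rewrite -has_count; apply/hasP; exists z; first by rewrite mem_filter xz.
  by rewrite /= ltirr.
have [y yL /andP [h1 h2]] := IH z (leq_trans cz (hk : _ <= k)) zL.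
exists y => //; rewrite h2 andbT.
case/orP: h1 => [/eqP -> | zy]; first by rewrite xz orbT.
by rewrite (lttr xz zy) orbT.
Qed.

Definition chain (C : seq V) :=
  forall x y, x \in C -> y \in C -> x != y -> lt x y || lt y x.
Definition antichain (A : seq V) :=
  forall x y, x \in A -> y \in A -> x != y -> ~~ (lt x y || lt y x).

Lemma mirsky m k (S : seq V) : uniq S -> (k * m.-1 < size S)%N ->
  (exists C, [/\ uniq C, size C = k.+1, {subset C <= S} & chain C]) \/
  (exists A, [/\ uniq A, size A = m, {subset A <= S} & antichain A]).
Proof.
elim: k S => [|k IH] S uS hS.
  left; case: S uS hS => // x S' _ _; exists [:: x]; split => //.
    by move=> y; rewrite inE => /eqP ->; rewrite inE eqxx.
  by move=> a b; rewrite !inE => /eqP -> /eqP ->; rewrite eqxx.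
set M := [seq x <- S | ~~ has (lt x) S].
set S' := [seq x <- S | has (lt x) S].
have hsz : size M + size S' = size S.
  by rewrite !size_filter addnC count_predC.
case: (leqP m (size M)) => hM.
  right; exists (take m M); split.
  - by rewrite take_uniq // filter_uniq.
  - by rewrite size_take_min; apply/minn_idPl.
  - by move=> x /mem_take; rewrite mem_filter => /andP [].
  - move=> x y /mem_take; rewrite mem_filter => /andP [hx xS].
    move=> /mem_take; rewrite mem_filter => /andP [hy yS] _.
    apply/negP => /orP [] h.
    + by move/negP: hx; apply; apply/hasP; exists y.
    + by move/negP: hy; apply; apply/hasP; exists x.
have hS' : (k * m.-1 < size S')%N.
  move: hS; rewrite mulSn -hsz; move: (k * m.-1) => K; lia.
case: (IH S' (filter_uniq _ uS) hS') => [[C [uC sC subC chC]] | [A [uA sA subA aA]]]; last first.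
  right; exists A; split => // x /subA; rewrite mem_filter => /andP [] //.
left.
have [c0 c0C] : exists c0, c0 \in C.
  by case: C sC {uC subC chC} => // c C' _; exists c; rewrite inE eqxx.
have [t tC /andP [_ ht]] := maxex c0C.
have := subC t tC; rewrite mem_filter => /andP [/hasP [z zS tz] tS].
have [y yS /andP [hy1 hy2]] := maxex zS.
have ty : lt t y.
  by case/orP: hy1 => [/eqP -> // | zy]; exact: (lttr tz zy).
have yC : y \notin C.
  apply/negP => /subC; rewrite mem_filter => /andP [h _].
  by move/negP: hy2.
have xy : forall x, x \in C -> lt x y.
  move=> x xC; case: (eqVneq x t) => [-> //|xt].
  case/orP: (chC x t xC tC xt) => h; first exact: (lttr h ty).
  by move/negP: ht; case; apply/hasP; exists x.
exists (y :: C); split.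
- by rewrite /= yC.
- by rewrite /= sC.
- move=> x; rewrite inE => /orP [/eqP -> // | /subC].
  by rewrite mem_filter => /andP [].
- move=> a b; rewrite !inE => /orP [/eqP -> | aC] /orP [/eqP -> | bC]; rewrite ?eqxx //.
  + by move=> _; rewrite xy ?orbT.
  + by move=> _; rewrite xy.
  + exact: chC.
Qed.

End Mirsky.

Lemma ramsey_order (V : eqType) (lt : rel V) (adj : V -> V -> Prop) :
  irreflexive lt -> transitive lt -> forall n m (S : seq V), (1 <= n)%N -> uniq S ->
  size S = ((n - 1) * (m - 1) + 1)%N ->
  (forall x y, x \in S -> y \in S -> x <> y -> (adj x y <-> lt x y || lt y x)) ->
  has_clique adj S n \/ has_indep adj S m.
Proof.
move=> irr tr n m S hn uS sS hadj.
have hk : (n.-1 * m.-1 < size S)%N by rewrite sS !subn1 addn1.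
case: (mirsky irr tr uS hk) => [[C [uC sC subC chC]] | [A [uA sA subA aA]]].
  left; exists C; split => //; first by rewrite sC prednK.
  move=> x y xC yC xy; apply/(hadj _ _ (subC _ xC) (subC _ yC) xy).
  by apply: chC => //; apply/eqP.
right; exists A; split => // x y xA yA xy /(hadj _ _ (subA _ xA) (subA _ yA) xy).
by apply/negP; apply: aA => //; apply/eqP.
Qed.

Lemma preim_list (V : eqType) (X : eqType) (e : X -> V) (L : seq X) (T : seq V) :
  {subset T <= map e L} -> exists P, T = map e P /\ {subset P <= L}.
Proof.
elim: T => [|x T IH] sub; first by exists [::].
have /mapP [p pL ->] := sub x (mem_head _ _).
have [P [-> sP]] : exists P, T = map e P /\ {subset P <= L}.
  by apply: IH => y yT; apply: sub; rewrite inE yT orbT.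
exists (p :: P); split => // q; rewrite inE => /orP [/eqP -> // | ]; exact: sP.
Qed.

Lemma lower (V : eqType) (adj : V -> V -> Prop) (vert : V -> Prop) a b
  (e : 'I_a * 'I_b -> V) :
  injective e -> (forall p, vert (e p)) ->
  (forall p q, p != q -> adj (e p) (e q) -> p.1 = q.1) ->
  (forall p q, p != q -> p.1 = q.1 -> adj (e p) (e q)) ->
  forall r, (r <= a * b)%N -> exists S : seq V, [/\ uniq S, size S = r,
     (forall x, x \in S -> vert x),
     ~ has_clique adj S b.+1 & ~ has_indep adj S a.+1].
Proof.
move=> einj hv h1 h2 r hr.
set L := take r (enum {: 'I_a * 'I_b}).
exists (map e L); split.
- by rewrite map_inj_uniq // take_uniq // enum_uniq.
- rewrite size_map size_take_min; apply/minn_idPl.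
  by rewrite -cardE card_prod !card_ord.
- by move=> x /mapP [p _ ->].
- case=> T [uT sT subT hT].
  have [P [eT _]] := preim_list subT; subst T.
  have uP : uniq P by rewrite (map_inj_uniq einj) in uT.
  have inj2 : {in P &, injective snd}.
    move=> p q pP qP e2; case: (eqVneq p q) => // pq.
    have neq : e p <> e q by move/einj; apply/eqP.
    have e1 := h1 p q pq (hT _ _ (map_f e pP) (map_f e qP) neq).
    by move: e1 e2 pq; case: p {pP neq} => ??; case: q {qP} => ?? /= -> ->; rewrite eqxx.
  have U2 : uniq (map snd P) by rewrite (map_inj_in_uniq inj2).
  have /card_uniqP := U2; rewrite size_map -(size_map e) sT => c.
  by have := max_card (mem (map snd P)); rewrite c card_ord ltnn.
- case=> T [uT sT subT hT].
  have [P [eT _]] := preim_list subT; subst T.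
  have uP : uniq P by rewrite (map_inj_uniq einj) in uT.
  have inj1 : {in P &, injective fst}.
    move=> p q pP qP e1; case: (eqVneq p q) => // pq.
    have neq : e p <> e q by move/einj; apply/eqP.
    by case: (hT _ _ (map_f e pP) (map_f e qP) neq); apply: h2.
  have U1 : uniq (map fst P) by rewrite (map_inj_in_uniq inj1).
  have /card_uniqP := U1; rewrite size_map -(size_map e) sT => c.
  by have := max_card (mem (map fst P)); rewrite c card_ord ltnn.
Qed.

Definition setlab a b (p : 'I_a * 'I_b) : {set 'I_a * 'I_b} :=
  [set u : 'I_a * 'I_b | (u.1 == p.1) && (u.2 <= p.2)%N].

Lemma setlab_sub a b (p q : 'I_a * 'I_b) :
  (setlab p \subset setlab q) = (p.1 == q.1) && (p.2 <= q.2)%N.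
Proof.
apply/subsetP/andP => [h | [/eqP e1 e2] u].
  by have := h p; rewrite !inE eqxx leqnn => /(_ isT) /andP [].
rewrite !inE => /andP [/eqP -> le]; rewrite e1 eqxx /=; exact: leq_trans le e2.
Qed.

Lemma setlab_inj a b : injective (@setlab a b).
Proof.
move=> p q e.
have := setlab_sub p q; have := setlab_sub q p; rewrite e subxx.
case: p q {e} => [p1 p2] [q1 q2] /= /esym /andP [/eqP -> h1] /esym /andP [_ h2].
by congr pair; apply/val_inj/anti_leq; rewrite h1 h2.
Qed.

Definition BR (aT : finType) := {ffun option aT -> 'Z_2}.
HB.instance Definition _ (aT : finType) :=
  GRing.PzRing.copy (BR aT) {ffun option aT -> 'Z_2}.
HB.instance Definition _ (aT : finType) :=
  GRing.PzSemiRing_isNonZero.Build (BR aT) (@ffun1_nonzero _ _ None).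
HB.instance Definition _ (aT : finType) :=
  GRing.PzRing_hasCommutativeMul.Build (BR aT) (@ffun_mulC _ _).

Lemma Z2_idem (x : 'Z_2) : (x * x = x)%R.
Proof. case: x => [[|[|k]] Hk]; apply/val_inj => //. Qed.

Lemma BR_bool (aT : finType) : boolean_ring (BR aT : comNzRingType).
Proof. by move=> f; apply/ffunP => t; rewrite ffunE Z2_idem. Qed.

Definition ind (aT : finType) (A : {set aT}) : BR aT :=
  [ffun t => if t is Some u then (if u \in A then 1%R else 0%R) else 0%R].

Lemma ind_mul (aT : finType) (A B : {set aT}) : (ind A * ind B)%R = ind (A :&: B).
Proof.
apply/ffunP => t; rewrite !ffunE; case: t => [u|]; rewrite ?mulr0 //.
by rewrite inE; case: (u \in A); case: (u \in B); rewrite ?mulr0 ?mul0r ?mulr1.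
Qed.

Lemma ind_inj (aT : finType) : injective (@ind aT).
Proof.
move=> A B e; apply/setP => u.
have := congr1 (fun f : BR aT => f (Some u)) e; rewrite /= !ffunE.
by case: (u \in A); case: (u \in B).
Qed.

Lemma rdivE (R : comNzRingType) (x y : R) : Defs.idempotent x ->
  rdivides x y <-> y = (x * y)%R.
Proof.
move=> ix; split => [[c ->] | h]; last by exists y.
by rewrite mulrA ix.
Qed.

Lemma ind_div (aT : finType) (A B : {set aT}) :
  @rdivides (BR aT) (ind A) (ind B) <-> B \subset A.
Proof.
rewrite rdivE; last by rewrite /Defs.idempotent ind_mul setIid.
rewrite ind_mul; split => [/ind_inj h | h]; first by apply/setIidPr.
by rewrite (setIidPr h).
Qed.

Theorem theorem3p23 (n m : nat) (hn : (1 <= n)%N) (hm : (1 <= m)%N) :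
  ramsey_number_is BOOL n m ((n - 1) * (m - 1) + 1)
  /\ ramsey_number_is IDM n m ((n - 1) * (m - 1) + 1)
  /\ ramsey_number_is PO n m ((n - 1) * (m - 1) + 1).
Proof.
have upIDM : ramsey_prop IDM n m ((n - 1) * (m - 1) + 1).
  move=> G [R ->] S uS sS hv.
  pose lt := fun a b : R => (a != b) && (b == a * b)%R.
  apply: (@ramsey_order _ lt) => //.
  - by move=> x; rewrite /lt eqxx.
  - move=> b a c; rewrite /lt => /andP [ab /eqP hb] /andP [bc /eqP hc]; apply/andP; split.
      apply/negP => /eqP ac; subst c; apply: (negP ab).
      by rewrite {1}hc mulrC -hb.
    apply/eqP; rewrite [in LHS]hc [in LHS]hb -mulrA -hc //.
  - move=> x y xS yS xy /=; have ix := hv x xS; have iy := hv y yS.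
    have xy' : x != y by apply/eqP.
    have yx : y != x by rewrite eq_sym.
    rewrite /lt xy' yx.
    rewrite /= !(rdivE _ ix) !(rdivE _ iy); split.
      by case=> _ [/eqP -> | /eqP ->]; rewrite ?orbT.
    by case/orP => /eqP h; split => //; [left | right].
have upPO : ramsey_prop PO n m ((n - 1) * (m - 1) + 1).
  move=> G [d [T ->]] S uS sS hv.
  apply: (@ramsey_order _ (fun a b : T => (a < b)%O)) => //.
  - by move=> b a c; apply: lt_trans.
  - move=> x y xS yS xy /=; rewrite !lt_neqAle.
    have xy' : x != y by apply/eqP.
    have yx : y != x by rewrite eq_sym.
    rewrite xy' yx.
    split; first by case=> _ [-> | ->]; rewrite ?orbT.
    by case/orP => h; split => //; [left | right].
have En : (n - 1).+1 = n by rewrite subn1 prednK.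
have Em : (m - 1).+1 = m by rewrite subn1 prednK.
have hr : forall r, (r < (n - 1) * (m - 1) + 1)%N -> (r <= (m - 1) * (n - 1))%N.
  by move=> r; rewrite addn1 ltnS mulnC.
have loBOOL : forall r, (r < (n - 1) * (m - 1) + 1)%N -> ~ ramsey_prop BOOL n m r.
  move=> r /hr hr' H.
  pose aT : finType := ('I_(m - 1) * 'I_(n - 1))%type.
  pose R := (BR aT : comNzRingType).
  pose e := fun p : aT => (ind (setlab p) : R).
  have [] := @lower (gV (Idm R)) (@gadj (Idm R)) (@gvert (Idm R)) _ _ e _ _ _ _ r hr'.
  - by move=> p q /ind_inj /setlab_inj.
  - by move=> p; rewrite /= /Defs.idempotent /e ind_mul setIid.
  - move=> p q _ [_ [/ind_div | /ind_div]]; rewrite setlab_sub => /andP [/eqP -> _] //.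
  - move=> p q pq e1; split.
      by move/ind_inj/setlab_inj => e2; move/eqP: pq.
    case: (leqP p.2 q.2) => h; [right | left]; apply/ind_div; rewrite setlab_sub ?e1 eqxx //.
    exact: ltnW.
  move=> S [uS sS vS nc ni].
  rewrite En Em in nc ni.
  case: (H (Idm R) _ S uS sS vS) => //.
  by exists R; split => //; apply: BR_bool.
have loPO : forall r, (r < (n - 1) * (m - 1) + 1)%N -> ~ ramsey_prop PO n m r.
  move=> r /hr hr' H.
  pose aT : finType := ('I_(m - 1) * 'I_(n - 1))%type.
  pose G := PO_graph ({set aT} : porderType _).
  have [] := @lower (gV G) (@gadj G) (@gvert G) _ _ (@setlab _ _) _ _ _ _ r hr'.
  - exact: setlab_inj.
  - by [].
  - move=> p q _ [_ [h|h]].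
      by move: (h : setlab p \subset setlab q); rewrite setlab_sub => /andP [/eqP -> _].
    by move: (h : setlab q \subset setlab p); rewrite setlab_sub => /andP [/eqP -> _].
  - move=> p q pq e1; split.
      by move/setlab_inj => e2; move/eqP: pq.
    case: (leqP p.2 q.2) => h; [left | right].
      by change (setlab p \subset setlab q); rewrite setlab_sub e1 eqxx.
    by change (setlab q \subset setlab p); rewrite setlab_sub e1 eqxx ltnW.
  move=> S [uS sS vS nc ni].
  rewrite En Em in nc ni.
  case: (H G _ S uS sS vS) => //.
  by exists _, ({set aT} : porderType _).
split; last split.
- split; last exact: loBOOL.
  move=> G [R [_ ->]]; apply: upIDM; by exists R.
- split => // r hr' H; apply: (loBOOL r hr') => G [R [_ ->]]; apply: H; by exists R.
- by split.
Qed.
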